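(* Let $\mathcal{M}=\langle M,\circ,e\rangle$ be an mge monoid. Then for every $n\ge1$, every equalizable tuple $\langle m_1,\dots,m_n\rangle\in M^n$ has an mge.
   Context: In a monoid $\langle M,\circ,e\rangle$, a tuple $\langle m_1,\dots,m_n\rangle\in M^n$ is equalizable if there is $\langle x_1,\dots,x_n\rangle\in M^n$ (an equalizer) with $m_1x_1=\dots=m_nx_n$; an equalizer is a most general equalizer (mge) if every equalizer has the form $\langle x_1x,\dots,x_nx\rangle$ for some $x\in M$. An mge monoid is a monoid with right cancellation ($ac=bc\Rightarrow a=b$) in which every equalizable pair has an mge. *)

(* Defs.v *)
From mathcomp Require Import all_boot.
Set Implicit Arguments. Unset Strict Implicit. Unset Printing Implicit Defensive.

Definition is_monoid (M : Type) (op : M -> M -> M) (e : M) : Prop :=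
  (forall a b c, op a (op b c) = op (op a b) c) /\
  (forall a, op e a = a) /\ (forall a, op a e = a).

Definition right_cancellative (M : Type) (op : M -> M -> M) : Prop :=
  forall a b c, op a c = op b c -> a = b.

Definition equalizer (M : Type) (op : M -> M -> M) (n : nat)
  (m x : 'I_n -> M) : Prop :=
  forall i j : 'I_n, op (m i) (x i) = op (m j) (x j).

Definition equalizable (M : Type) (op : M -> M -> M) (n : nat)
  (m : 'I_n -> M) : Prop :=
  exists x : 'I_n -> M, equalizer op m x.

Definition mge (M : Type) (op : M -> M -> M) (n : nat)
  (m x : 'I_n -> M) : Prop :=
  equalizer op m x /\
  forall y : 'I_n -> M, equalizer op m y ->
    exists z : M, forall i : 'I_n, y i = op (x i) z.

Definition mge_monoid (M : Type) (op : M -> M -> M) (e : M) : Prop :=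
  is_monoid op e /\ right_cancellative op /\
  forall m : 'I_2 -> M, equalizable op m -> exists x, mge op m x.

(* Main.v *)
Require Import Defs.
From mathcomp Require Import all_boot.

Section Aux.
Variables (M : Type) (op : M -> M -> M) (e : M).

Definition eqz k (m x : nat -> M) :=
  forall i, i <= k -> op (m i) (x i) = op (m 0) (x 0).
Definition mgez k (m x : nat -> M) :=
  eqz k m x /\ forall y, eqz k m y -> exists z, forall i, i <= k -> y i = op (x i) z.

Lemma eq2 (p q : 'I_2 -> M) :
  op (p ord0) (q ord0) = op (p ord_max) (q ord_max) -> equalizer op p q.
Proof.
move=> H.
have K : forall i : 'I_2, op (p i) (q i) = op (p ord0) (q ord0).
  case=> [[|[|i]] Hi] //.
  - by congr (op (p _) (q _)); apply: val_inj.
  - by rewrite H; congr (op (p _) (q _)); apply: val_inj.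
by move=> i j; rewrite !K.
Qed.

Lemma mainz : mge_monoid op e -> forall k m,
  (exists y, eqz k m y) -> exists x, mgez k m x.
Proof.
move=> [[A [L R]] [_ Hmge]].
elim=> [|k IH] m [y Hy].
  exists (fun _ => e); split.
    by move=> i; rewrite leqn0 => /eqP ->.
  move=> y' _; exists (y' 0) => i; rewrite leqn0 => /eqP ->; by rewrite L.
have Hyk : eqz k m y by move=> i Hi; apply: Hy; apply: leqW.
have [x [Hx Hxg]] := IH m (ex_intro _ y Hyk).
set c := op (m 0) (x 0).
pose p : 'I_2 -> M := fun i => if val i == 0 then c else m k.+1.
have Heqb : forall y', eqz k.+1 m y' -> forall z, (forall i, i <= k -> y' i = op (x i) z) ->
    equalizer op p (fun i : 'I_2 => if val i == 0 then z else y' k.+1).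
  move=> y' Hy' z Hz; apply: eq2 => /=.
  rewrite /p /= /c -A -Hz // Hy' //.
have [z Hz] := Hxg y Hyk.
have [uv [Huv Huvg]] := Hmge p (ex_intro _ _ (Heqb y Hy z Hz)).
pose u := uv ord0; pose v := uv ord_max.
have Hcuv : op c u = op (m k.+1) v.
  by have := Huv ord0 ord_max; rewrite /p /=.
exists (fun i => if i <= k then op (x i) u else v); split.
  move=> i Hi /=.
  have -> : op (m 0) (op (x 0) u) = op c u by rewrite /c A.
  case: ifP => Hik.
    by rewrite A Hx.
  have -> : i = k.+1 by apply/eqP; rewrite eqn_leq Hi ltnNge Hik.
  by rewrite Hcuv.
move=> y' Hy'.
have Hy'k : eqz k m y' by move=> i Hi; apply: Hy'; apply: leqW.
have [z' Hz'] := Hxg y' Hy'k.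
have [w Hw] := Huvg _ (Heqb y' Hy' z' Hz').
exists w => i Hi.
case: ifP => Hik.
  by rewrite Hz' // -A; congr (op _ _); exact: (Hw ord0).
have -> : i = k.+1 by apply/eqP; rewrite eqn_leq Hi ltnNge Hik.
exact: (Hw ord_max).
Qed.
End Aux.

Theorem lemma5 (M : Type) (op : M -> M -> M) (e : M) :
  mge_monoid op e ->
  forall (n : nat), 1 <= n ->
  forall m : 'I_n -> M, equalizable op m ->
  exists x : 'I_n -> M, mge op m x.
Proof.
move=> H [|k] // _ m [x Hx].
pose mn := fun i : nat => m (inord i).
have Hin : forall o : 'I_k.+1, inord (val o) = o by move=> o; apply: inord_val.
have Ex : exists y, eqz M op k mn y.
  by exists (fun i => x (inord i)) => i _; apply: Hx.
have [X [HX HXg]] := @mainz M op e H k mn Ex.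
exists (fun o => X (val o)); split.
  move=> i j.
  have E : forall o : 'I_k.+1, op (m o) (X o) = op (mn 0) (X 0).
    move=> o; have Ho : val o <= k := ltn_ord o.
    by have := HX o Ho; rewrite /mn Hin.
  by rewrite !E.
move=> y Hy.
have Ey : eqz M op k mn (fun i => y (inord i)) by move=> i _; apply: Hy.
have [z Hz] := HXg _ Ey.
exists z => o; have Ho : val o <= k := ltn_ord o.
by have := Hz o Ho; rewrite Hin.
Qed.
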